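(* Let $d\ge 1$ and let $(X_1,\ldots,X_d,Y)$ be a random vector with continuous marginal distribution functions and $(d+1)$-dimensional copula $C$; let $(U_1,\ldots,U_d,V)$ have standard uniform marginals and copula $C$. Fix $\boldsymbol{\alpha}\in[0,1)^d$ with $C(\boldsymbol{\alpha},1)<1$. Then for every $\beta\in(0,1)$, $$\mathrm{VCoVaR}_{\boldsymbol{\alpha},\beta}(Y|\boldsymbol X)=F_Y^{-1}\big(F^{-1}_{V|A_{\boldsymbol U}}(\beta)\big),$$ where $F_{V|A_{\boldsymbol U}}$ is the distribution function of $V$ given $A_{\boldsymbol U}=\{\exists\, i:U_i>\alpha_i\}$.
   Context: $C(\boldsymbol{\alpha},v)=C(\alpha_1,\ldots,\alpha_d,v)$. For a distribution function $F$, $F^{-1}(t)=\inf\{x:F(x)\ge t\}$; $\mathrm{VaR}_t(Z)=F_Z^{-1}(t)$. The vulnerability conditional value-at-risk is $\mathrm{VCoVaR}_{\boldsymbol{\alpha},\beta}(Y|\boldsymbol X)=\mathrm{VaR}_\beta\big(Y\,\big|\,\exists\, i: X_i>\mathrm{VaR}_{\alpha_i}(X_i)\big)$, i.e. the $\beta$-quantile (generalized inverse) of the conditional distribution of $Y$ given the event $\{\exists\, i: X_i>\mathrm{VaR}_{\alpha_i}(X_i)\}$. *)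

(* Defs.v *)
From HB Require Import structures.
From mathcomp Require Import all_boot all_order all_algebra.
From mathcomp Require Import all_classical all_reals all_analysis.
Set Implicit Arguments. Unset Strict Implicit. Unset Printing Implicit Defensive.
Import Order.TTheory GRing.Theory Num.Theory.
Local Open Scope classical_set_scope.
Local Open Scope ring_scope.

Section Defs.
Context {R : realType} {dT : measure_display} {T : measurableType dT}.

(* generalized inverse F^{-1}(t) = inf {x : F x >= t}, valued in extended reals
   (so that e.g. F^{-1}(0) = -oo) *)
Definition quantile (F : R -> R) (t : \bar R) : \bar R :=
  ereal_inf [set x%:E | x in [set x : R | (t <= (F x)%:E)%E]].

Definition df (P : probability T R) (Z : T -> R) (x : R) : R :=
  fine (P [set w | Z w <= x]).

Definition cond_df (P : probability T R) (Z : T -> R) (A : set T) (x : R) : R :=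
  fine (P ([set w | Z w <= x] `&` A)) / fine (P A).

Definition VaR (P : probability T R) (Z : T -> R) (t : R) : \bar R :=
  quantile (df P Z) t%:E.

Definition exceed_event (n : nat) (P : probability T R) (X : 'I_n -> T -> R)
  (alpha : 'I_n -> R) : set T :=
  [set w | exists i : 'I_n, (VaR P (X i) (alpha i) < (X i w)%:E)%E].

Definition VCoVaR (n : nat) (P : probability T R) (X : 'I_n -> T -> R)
  (Y : T -> R) (alpha : 'I_n -> R) (beta : R) : \bar R :=
  quantile (cond_df P Y (exceed_event P X alpha)) beta%:E.

End Defs.

(* Main.v *)
Require Import Defs.
From HB Require Import structures.
From mathcomp Require Import all_boot all_order all_algebra.
From mathcomp Require Import all_classical all_reals all_analysis.
From mathcomp Require Import lra.
Import Order.TTheory GRing.Theory Num.Theory numFieldNormedType.Exports.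
Local Open Scope classical_set_scope.
Local Open Scope ring_scope.

Set Implicit Arguments.
Section Pr.
Context (R : realType) (dT : measure_display) (T : measurableType dT) (Q : probability T R).
Definition pr (A : set T) : R := fine (Q A).

Lemma prE A : measurable A -> (pr A)%:E = Q A.
Proof. by move=> mA; rewrite /pr fineK // fin_num_measure. Qed.

Lemma pr_ge0 A : 0 <= pr A.
Proof. by rewrite /pr fine_ge0. Qed.

Lemma pr_le1 A : measurable A -> pr A <= 1.
Proof. by move=> mA; rewrite -lee_fin prE // probability_le1. Qed.

Lemma pr_le A B : measurable A -> measurable B -> A `<=` B -> pr A <= pr B.
Proof. by move=> mA mB AB; rewrite -lee_fin !prE // le_measure // inE. Qed.

Lemma pr_split A B : measurable A -> measurable B ->
  pr A = pr (A `&` B) + pr (A `&` ~` B).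
Proof.
move=> mA mB; apply/eqP; rewrite -eqe EFinD !prE //; try by apply: measurableI => //; apply: measurableC.
rewrite -measureU //; try by apply: measurableI => //; apply: measurableC.
  by rewrite -setIUr setUv setIT.
by rewrite setIACA setICr setI0.
Qed.

Lemma pr_C A : measurable A -> pr (~` A) = 1 - pr A.
Proof.
move=> mA; apply/eqP; rewrite -eqe EFinB !prE //; last exact: measurableC.
by rewrite probability_setC.
Qed.

Lemma pr_T : pr setT = 1.
Proof. by rewrite /pr probability_setT. Qed.
End Pr.
Section Q.
Context (R : realType).

Lemma quantile_comp (H G : R -> R) (beta r : R) :
  (forall v, beta <= H v <-> r <= v) ->
  quantile (H \o G) beta%:E = quantile G r%:E.
Proof.
move=> hH; rewrite /quantile; congr ereal_inf; congr image.
by apply/seteqP; split => y /=; rewrite !lee_fin => /hH.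
Qed.

Lemma quantile_threshold (H : R -> R) (beta p : R) :
  (forall v v', v <= v' -> H v <= H v') -> H 0 < beta -> beta <= H 1 -> 0 < p ->
  (forall v v', 0 <= v -> v <= v' -> v' <= 1 -> H v' - H v <= (v' - v) / p) ->
  exists r : R, quantile H beta%:E = r%:E /\ (forall v, beta <= H v <-> r <= v).
Proof.
move=> hmono h0 h1 p0 hlip.
set S := [set v | beta <= H v].
have lbS : lbound S 0.
  move=> v; rewrite /S /= => hv; rewrite leNgt; apply/negP => v0.
  by have := hmono _ _ (ltW v0); lra.
have hlS : has_lbound S by exists 0.
have neS : S !=set0 by exists 1.
have r0 : 0 <= inf S by apply: lb_le_inf.
have r1 : inf S <= 1 by apply: ge_inf.
have Hr : beta <= H (inf S).
  rewrite leNgt; apply/negP => Hlt.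
  have eps0 : 0 < (beta - H (inf S)) * p by apply: mulr_gt0; lra.
  have hinf : has_inf S by split.
  have [e Se ltE] := inf_adherent eps0 hinf.
  have rle : inf S <= e by apply: ge_inf.
  set w := Num.min e 1.
  have Sw : S w by rewrite /w; case: (leP e 1) => _ //.
  have rw : inf S <= w by rewrite /w le_min rle r1.
  have w1 : w <= 1 by rewrite /w ge_min lexx orbT.
  have we : w <= e by rewrite /w ge_min lexx.
  have := hlip _ _ r0 rw w1.
  have : (w - inf S) / p < beta - H (inf S).
    rewrite ltr_pdivrMr //; lra.
  move: Sw; rewrite /S /=; lra.
exists (inf S); split.
  rewrite /quantile; have -> : [set x%:E | x in [set x | (beta%:E <= (H x)%:E)%E]] = EFin @` S.
    by congr image; apply/seteqP; split => x /=; rewrite lee_fin.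
  by rewrite ereal_inf_EFin.
move=> v; split => [Sv|rv]; first by apply: ge_inf.
exact: le_trans Hr (hmono _ _ rv).
Qed.

Lemma quantile_cont (F : R -> R) (a : R) :
  continuous F -> (forall v v', v <= v' -> F v <= F v') ->
  (exists x, F x < a) -> (exists x, a <= F x) ->
  exists q, quantile F a%:E = q%:E /\ F q = a.
Proof.
move=> cF hmono [x0 hx0] [x1 hx1].
set S := [set x | a <= F x].
have lbS : lbound S x0.
  move=> v; rewrite /S /= => hv; rewrite leNgt; apply/negP => v0.
  by have := hmono _ _ (ltW v0); lra.
have hlS : has_lbound S by exists x0.
have neS : S !=set0 by exists x1.
have clS : closed S.
  have -> : S = F @^-1` [set x | a <= x] by [].
  by apply: preimage_closed; [move=> x _; apply: cF | apply: closed_ge].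
have Sq : S (inf S).
  apply: (itv_closed_infimums neS clS); split; first exact: ge_inf.
  by move=> x hx; apply: lb_le_inf.
have x0q : x0 <= inf S by apply: lb_le_inf.
have [c /andP[c1 c2] Fc] : exists2 c, x0 <= c <= inf S & F c = a.
  have := @IVT R F x0 (inf S) a x0q (continuous_subspaceT cF).
  move: Sq; rewrite /S /= => Sq.
  have -> : Num.min (F x0) (F (inf S)) = F x0 by apply/min_idPl; lra.
  have -> : Num.max (F x0) (F (inf S)) = F (inf S) by apply/max_idPr; lra.
  rewrite Sq (ltW hx0) => /(_ isT) [c]; rewrite in_itv /= => hc Fc.
  by exists c.
have qc : inf S <= c by apply: ge_inf => //; rewrite /S /= Fc.
have cq : c = inf S by apply/eqP; rewrite eq_le c2 qc.
exists (inf S); split; last by rewrite -cq.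
rewrite /quantile; have -> : [set x%:E | x in [set x | (a%:E <= (F x)%:E)%E]] = EFin @` S.
  by congr image; apply/seteqP; split => x /=; rewrite lee_fin.
by rewrite ereal_inf_EFin.
Qed.
End Q.
Section DF.
Context (R : realType) (dT : measure_display) (T : measurableType dT) (P : probability T R).

Lemma mle (Z : T -> R) (mZ : measurable_fun setT Z) x : measurable [set w | Z w <= x].
Proof.
have := mZ measurableT _ (measurable_itv `]-oo, x]).
by rewrite setTI; congr measurable; apply/seteqP; split => w /=; rewrite in_itv.
Qed.

Lemma mall (n : nat) (Z : 'I_n -> T -> R) (mZ : forall i, measurable_fun setT (Z i))
  (c : 'I_n -> R) : measurable [set w | forall i, Z i w <= c i].
Proof.
have -> : [set w | forall i, Z i w <= c i] = \bigcap_(i in setT) [set w | Z i w <= c i].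
  by apply/seteqP; split => w /= H i; [move=> _; apply: H | apply: H].
apply: fin_bigcap_measurable; first exact: finite_finset.
by move=> i _; apply: mle.
Qed.

Lemma df_pr (Z : T -> R) x : df P Z x = pr P [set w | Z w <= x].
Proof. by []. Qed.

Lemma df_mono (Z : T -> R) (mZ : measurable_fun setT Z) x y : x <= y -> df P Z x <= df P Z y.
Proof.
move=> xy; rewrite !df_pr; apply: pr_le; try exact: mle.
by move=> w /= h; apply: le_trans h xy.
Qed.

Lemma df_ge0 (Z : T -> R) x : 0 <= df P Z x.
Proof. exact: pr_ge0. Qed.

Lemma df_le1 (Z : T -> R) (mZ : measurable_fun setT Z) x : df P Z x <= 1.
Proof. by apply: pr_le1; apply: mle. Qed.

Section Z.
Variables (Z : T -> R) (mZ : measurable_fun setT Z).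
Let Zm : {RV P >-> R} := mfun_Sub (mem_set mZ).

Lemma dfE x : (df P Z x)%:E = P [set w | Z w <= x].
Proof. by rewrite /df fineK // fin_num_measure //; apply: mle. Qed.

Lemma cdfE x : cdf Zm x = (df P Z x)%:E.
Proof. by rewrite dfE /cdf /distribution /pushforward /=; congr (P _). Qed.

Lemma df_cvgy : df P Z @ +oo --> (1:R).
Proof.
have := cvg_cdfy1 Zm.
have -> : cdf Zm = (fun x => (df P Z x)%:E) by apply/funext => x; rewrite cdfE.
by move/fine_cvg.
Qed.
Lemma df_cvgNy : df P Z @ -oo --> (0:R).
Proof.
have := cvg_cdfNy0 Zm.
have -> : cdf Zm = (fun x => (df P Z x)%:E) by apply/funext => x; rewrite cdfE.
by move/fine_cvg.
Qed.

Lemma df_big e : 0 < e -> exists x, 1 - e < df P Z x.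
Proof.
move=> e0; have := (cvgrPdist_lt _ _).1 df_cvgy e e0.
move=> [M [_ HM]]; exists (M + 1); have := HM (M + 1).
rewrite ltrDl ltr01 => /(_ isT); rewrite ltr_norml; lra.
Qed.

Lemma df_small e : 0 < e -> exists x, df P Z x < e.
Proof.
move=> e0; have := (cvgrPdist_lt _ _).1 df_cvgNy e e0.
move=> [M [_ HM]]; exists (M - 1); have := HM (M - 1).
rewrite gtrDl ltrN10 => /(_ isT); rewrite ltr_norml; lra.
Qed.
End Z.
End DF.
Unset Implicit Arguments.
Theorem corollary3p3 (R : realType) (d : nat) (hd : (0 < d)%N)
  (dT : measure_display) (T : measurableType dT) (P : probability T R)
  (X : 'I_d -> T -> R) (Y : T -> R)
  (dT' : measure_display) (T' : measurableType dT') (P' : probability T' R)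
  (U : 'I_d -> T' -> R) (V : T' -> R)
  (C : ('I_d -> R) -> R -> R) (alpha : 'I_d -> R) :
  (forall i, measurable_fun setT (X i)) -> measurable_fun setT Y ->
  (forall i, measurable_fun setT (U i)) -> measurable_fun setT V ->
  (* continuous marginal distribution functions *)
  (forall i, continuous (df P (X i) : R -> R)) -> continuous (df P Y : R -> R) ->
  (* (U, V) has standard uniform marginals and joint distribution function C
     on [0,1]^(d+1), i.e. C is a (d+1)-copula, the copula of (U, V) *)
  (forall i (u : R), 0 <= u <= 1 -> df P' (U i) u = u) ->
  (forall v : R, 0 <= v <= 1 -> df P' V v = v) ->
  (forall (u : 'I_d -> R) (v : R), (forall i, 0 <= u i <= 1) -> 0 <= v <= 1 ->
     fine (P' [set w | (forall i, U i w <= u i) /\ V w <= v]) = C u v) ->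
  (* C is the copula of (X, Y) (Sklar representation) *)
  (forall (x : 'I_d -> R) (y : R),
     fine (P [set w | (forall i, X i w <= x i) /\ Y w <= y])
     = C (fun i => df P (X i) (x i)) (df P Y y)) ->
  (forall i, 0 <= alpha i < 1) ->
  C alpha 1 < 1 ->
  forall beta : R, 0 < beta < 1 ->
  VCoVaR P X Y alpha beta =
  quantile (df P Y)
    (quantile (cond_df P' V [set w | exists i, alpha i < U i w]) beta%:E).
Proof.
move=> mX mY mU mV cF cG dfU dfV hCU hCX halpha hC1 beta /andP[b0 b1].
have halpha' : forall i, 0 <= alpha i <= 1.
  by move=> i; have /andP[h1 h2] := halpha i; rewrite h1 ltW.
set BU := [set w | forall i, U i w <= alpha i].
set AU := [set w | exists i, alpha i < U i w].
have mBU : measurable BU by apply: mall.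
have AUE : AU = ~` BU.
  apply/seteqP; split => w /=.
    by move=> [i hi] H; have := H i; rewrite leNgt hi.
  move=> /existsNP [i hi]; exists i; rewrite ltNge; apply/negP => h; exact: hi h.
have mAU : measurable AU by rewrite AUE; apply: measurableC.
set Vle := fun v => [set w | V w <= v].
have mVle : forall v, measurable (Vle v) by move=> v; apply: mle.
set a := fun v => pr P' (Vle v `&` AU).
set b := fun v => pr P' (BU `&` Vle v).
have ab : forall v, a v + b v = df P' V v.
  move=> v; change (df P' V v) with (pr P' (Vle v)).
  have := pr_split P' _ _ (mVle v) mBU; rewrite /a /b AUE (setIC BU); lra.
have bC : forall v, 0 <= v <= 1 -> b v = C alpha v.
  by move=> v hv; rewrite -hCU.
have bmono : forall v v', v <= v' -> b v <= b v'.
  move=> v v' vv'; apply: pr_le; try by apply: measurableI.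
  by move=> w [h1 h2]; split => //; rewrite /Vle /=; apply: le_trans h2 vv'.
have amono : forall v v', v <= v' -> a v <= a v'.
  move=> v v' vv'; apply: pr_le; try by apply: measurableI.
  by move=> w [h1 h2]; split => //; rewrite /Vle /=; apply: le_trans h1 vv'.
have dfV0 : df P' V 0 = 0 by apply: dfV; rewrite lexx ler01.
have dfV1 : df P' V 1 = 1 by apply: dfV; rewrite lexx ler01.
have a0 : a 0 = 0.
  have := ab 0; rewrite dfV0; have := pr_ge0 P' (BU `&` Vle 0);
    have := pr_ge0 P' (Vle 0 `&` AU); rewrite /a /b; lra.
have nV1 : pr P' (~` Vle 1) = 0.
  by rewrite pr_C //; change (1 - df P' V 1 = 0); rewrite dfV1 subrr.
have pBU : pr P' BU = C alpha 1.
  rewrite -bC ?lexx ?ler01 //.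
  have := pr_split P' _ _ mBU (mVle 1).
  have := @pr_le _ _ _ P' (BU `&` ~` Vle 1) (~` Vle 1).
  have := pr_ge0 P' (BU `&` ~` Vle 1).
  rewrite nV1 /b => h1 h2; have := h2 (measurableI _ _ mBU (measurableC (mVle 1))) (measurableC (mVle 1)) (@subIsetr _ _ _).
  lra.
have pAU : pr P' AU = 1 - C alpha 1 by rewrite AUE pr_C // pBU.
have a1 : a 1 = pr P' AU.
  have := pr_split P' _ _ mAU (mVle 1).
  have := @pr_le _ _ _ P' (AU `&` ~` Vle 1) (~` Vle 1).
  have := pr_ge0 P' (AU `&` ~` Vle 1).
  rewrite nV1 /a (setIC (Vle 1)) => h1 h2; have := h2 (measurableI _ _ mAU (measurableC (mVle 1))) (measurableC (mVle 1)) (@subIsetr _ _ _).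
  lra.
have p0 : 0 < pr P' AU by rewrite pAU subr_gt0.
set HU := fun v => a v / pr P' AU.
have [r [hq hr]] : exists r : R, quantile HU beta%:E = r%:E /\ (forall v, beta <= HU v <-> r <= v).
  apply: (quantile_threshold R HU beta (pr P' AU)) => //.
  - by move=> v v' vv'; rewrite /HU ler_wpM2r ?invr_ge0 ?(ltW p0) // amono.
  - by rewrite /HU a0 mul0r.
  - rewrite /HU a1 divff ?(ltW b1) //; exact: lt0r_neq0.
  - move=> v v' v0 vv' v1; rewrite /HU -mulrBl ler_wpM2r ?invr_ge0 ?(ltW p0) //.
    have := ab v; have := ab v'; rewrite !dfV; last 2 first.
    + by rewrite v0 (le_trans vv' v1).
    + by rewrite (le_trans v0 vv') v1.
    have := bmono _ _ vv'; lra.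
set BX := [set w | forall i, ((X i w)%:E <= VaR P (X i) (alpha i))%E].
have AXE : exceed_event P X alpha = ~` BX.
  apply/seteqP; split => w /=.
    by move=> [i hi] H; have := H i; rewrite leNgt hi.
  move=> /existsNP [i hi]; exists i; rewrite ltNge; apply/negP => h; exact: hi h.
set Yle := fun y => [set w | Y w <= y].
have mYle : forall y, measurable (Yle y) by move=> y; apply: mle.
have Gin : forall y, 0 <= df P Y y <= 1.
  by move=> y; rewrite df_ge0 df_le1.
have [mBX hbX] : measurable BX /\ forall y, pr P (BX `&` Yle y) = b (df P Y y).
  have [[j hj]|hpos] : (exists j, alpha j = 0) \/ (forall i, 0 < alpha i).
    case: (pselect (exists j, alpha j = 0)) => [h|h]; [by left|right] => i.
    have /andP[h1 _] := halpha i; rewrite lt_neqAle h1 andbT.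
    by apply/eqP => e; apply: h; exists i; rewrite e.
  - have BX0 : BX = set0.
      apply/seteqP; split => w //= H.
      have hle : (VaR P (X j) (alpha j) <= (X j w - 1)%:E)%E.
        apply: ereal_inf_lbound; exists (X j w - 1) => //.
        by rewrite /= hj lee_fin; exact: df_ge0.
      have := le_trans (H j) hle; rewrite lee_fin; lra.
    split; first by rewrite BX0; exact: measurable0.
    move=> y; rewrite BX0 set0I.
    have -> : pr P set0 = 0 by rewrite /pr measure0.
    have hb : b (df P Y y) <= df P' (U j) 0.
      apply: pr_le; [by apply: measurableI | by apply: mle|].
      by move=> w [h1 _]; rewrite /= -hj; apply: h1.
    move: hb; rewrite dfU ?lexx ?ler01 //.
    have := pr_ge0 P' (BU `&` Vle (df P Y y)); rewrite /b; lra.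
  - have hex : forall i, exists q, VaR P (X i) (alpha i) = q%:E /\ df P (X i) q = alpha i.
      move=> i; apply: quantile_cont; first exact: cF.
      + by move=> v v' vv'; apply: df_mono.
      + by apply: df_small => //; apply: hpos.
      + have /andP[_ h2] := halpha i.
        have e0 : 0 < 1 - alpha i by rewrite subr_gt0.
        have [x hx] := df_big P (mX i) _ e0.
        by exists x; lra.
    have [qf hqf] := choice hex.
    have BXE : BX = [set w | forall i, X i w <= qf i].
      by apply/seteqP; split => w /= H i; have := H i; rewrite (hqf i).1 lee_fin.
    split; first by rewrite BXE; apply: mall.
    move=> y; rewrite BXE.
    change (fine (P [set w | (forall i, X i w <= qf i) /\ Y w <= y]) = b (df P Y y)).
    rewrite hCX.
    have -> : (fun i => df P (X i) (qf i)) = alpha by apply/funext => i; rewrite (hqf i).2.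
    by rewrite bC.
have k1 : forall y, pr P BX - pr P (BX `&` Yle y) <= 1 - df P Y y.
  move=> y; have := pr_split P _ _ mBX (mYle y).
  have := @pr_le _ _ _ P (BX `&` ~` Yle y) (~` Yle y).
  rewrite pr_C // => h1; have := h1 (measurableI _ _ mBX (measurableC (mYle y))) (measurableC (mYle y)) (@subIsetr _ _ _).
  change (pr P (Yle y)) with (df P Y y); lra.
have k2 : forall v, 0 <= v <= 1 -> pr P' BU - b v <= 1 - v.
  move=> v hv; have := pr_split P' _ _ mBU (mVle v).
  have := @pr_le _ _ _ P' (BU `&` ~` Vle v) (~` Vle v).
  rewrite pr_C // => h1; have := h1 (measurableI _ _ mBU (measurableC (mVle v))) (measurableC (mVle v)) (@subIsetr _ _ _).
  change (pr P' (Vle v)) with (df P' V v); rewrite dfV //; rewrite /b; lra.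
have k3 : forall v, b v <= pr P' BU.
  by move=> v; apply: pr_le => //; [apply: measurableI | apply: subIsetl..].
have k4 : forall y, pr P (BX `&` Yle y) <= pr P BX.
  by move=> y; apply: pr_le => //; [apply: measurableI | apply: subIsetl..].
have pBX : pr P BX = pr P' BU.
  apply/eqP; rewrite eq_le; apply/andP; split; apply/ler_addgt0Pr => e e0;
    have [y hy] := df_big P mY e e0; have := k1 y; have := k2 _ (Gin y);
    have := k3 (df P Y y); have := k4 y; rewrite hbX; lra.
have pAX : pr P (exceed_event P X alpha) = pr P' AU.
  by rewrite AXE pr_C // pBX AUE pr_C.
have HXE : cond_df P Y (exceed_event P X alpha) = HU \o df P Y.
  apply/funext => y.
  change (pr P (Yle y `&` exceed_event P X alpha) / pr P (exceed_event P X alpha)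
    = a (df P Y y) / pr P' AU).
  rewrite pAX; congr (_ / _).
  have := pr_split P _ _ (mYle y) mBX; have := hbX y; have := ab (df P Y y).
  rewrite dfV // AXE (setIC BX).
  change (pr P (Yle y)) with (df P Y y); lra.
rewrite /VCoVaR HXE (quantile_comp R HU (df P Y) beta r hr) -hq //.
Qed.
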